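(* Consider the graded cluster algebra $\mathcal{A}\big((x_1,x_2,x_3),B,(1,1,2)\big)$ with $B=\begin{pmatrix}0&2&-1\\-2&0&1\\1&-1&0\end{pmatrix}$. The only degrees of cluster variables that occur are $1,-1,2,-2$.
   Context: Graded cluster algebras: for a $3\times3$ skew-symmetric integer matrix $B=(b_{ij})$ and $k\in\{1,2,3\}$, $\mu_k(B)=(b'_{ij})$ with $b'_{ij}=-b_{ij}$ if $i=k$ or $j=k$ and $b'_{ij}=b_{ij}+\operatorname{sgn}(b_{ik})\max(b_{ik}b_{kj},0)$ otherwise. A seed $((x_1,x_2,x_3),B)$ mutates in direction $k$ to $(x',\mu_k B)$ with $x'_j=x_j$ ($j\ne k$) and $x'_k=\big(\prod_{b_{ik}>0}x_i^{b_{ik}}+\prod_{b_{ik}<0}x_i^{-b_{ik}}\big)/x_k$. Cluster variables are all entries of clusters reachable by iterated mutation; $\mathcal{A}(x,B,g)$ is the algebra they generate, graded by $\deg x_i=g_i$ where $Bg=0$; under mutation at $k$ the degree vector becomes $g'$ with $g'_j=g_j$ ($j\neq k$), $g'_k=-g_k+\sum_{b_{ik}>0}b_{ik}g_i$, and every cluster variable is homogeneous of the degree recorded in any seed containing it. *)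

(* Defs.v *)
From Stdlib Require Import ZArith List Arith.
Import ListNotations.
Open Scope Z_scope.

(* A 3x3 integer matrix, indexed by 0,1,2. *)
Definition mat := nat -> nat -> Z.
Definition dvec := nat -> Z.

Definition mutB (B : mat) (k : nat) : mat :=
  fun i j =>
    if orb (Nat.eqb i k) (Nat.eqb j k) then - B i j
    else B i j + Z.sgn (B i k) * Z.max (B i k * B k j) 0.

(* Degree-vector mutation at k (using the matrix B before mutation):
   g'_k = -g_k + sum_{b_ik > 0} b_ik g_i, g'_j = g_j otherwise. *)
Definition mutg (B : mat) (g : dvec) (k : nat) : dvec :=
  fun j =>
    if Nat.eqb j k then
      - g k + (Z.max (B 0%nat k) 0 * g 0%nat
             + Z.max (B 1%nat k) 0 * g 1%nat
             + Z.max (B 2%nat k) 0 * g 2%nat)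
    else g j.

Definition mut_seed (s : mat * dvec) (k : nat) : mat * dvec :=
  (mutB (fst s) k, mutg (fst s) (snd s) k).

Definition mut_seq (s : mat * dvec) (ks : list nat) : mat * dvec :=
  fold_left mut_seed ks s.

Definition B0 : mat := fun i j =>
  match i, j with
  | O, S O => 2 | O, S (S O) => -1
  | S O, O => -2 | S O, S (S O) => 1
  | S (S O), O => 1 | S (S O), S O => -1
  | _, _ => 0
  end.

Definition g0 : dvec := fun i =>
  match i with O => 1 | S O => 1 | S (S O) => 2 | _ => 0 end.

(* d is the degree of some cluster variable of A((x1,x2,x3),B0,g0):
   a cluster variable is the k-th entry of a cluster reachable by a
   sequence of mutations ks, and its degree is the k-th entry of the degree
   vector of that seed. *)
Definition cluster_degree (d : Z) : Prop :=
  exists (ks : list nat) (k : nat),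
    Forall (fun i => (i < 3)%nat) ks /\ (k < 3)%nat /\
    snd (mut_seq (B0, g0) ks) k = d.

(* Main.v *)
Require Import Defs.
From Stdlib Require Import ZArith List Lia.
Import ListNotations.
Open Scope Z_scope.

Definition agree (s1 s2 : (mat * dvec)%type) : Prop :=
  (forall i j, (i < 3)%nat -> (j < 3)%nat -> fst s1 i j = fst s2 i j) /\ (forall i, (i < 3)%nat -> snd s1 i = snd s2 i).

Lemma agree_mut s1 s2 k : agree s1 s2 -> (k < 3)%nat -> agree (mut_seed s1 k) (mut_seed s2 k).
Proof.
  intros [HB Hg] Hk; destruct s1 as [B1 g1], s2 as [B2 g2]; simpl in *.
  split; simpl.
  - intros i j Hi Hj; unfold mutB.
    rewrite (HB i j Hi Hj), (HB i k Hi Hk), (HB k j Hk Hj); reflexivity.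
  - intros i Hi; unfold mutg.
    rewrite (Hg i Hi), (Hg k Hk), (Hg 0%nat ltac:(lia)), (Hg 1%nat ltac:(lia)),
      (Hg 2%nat ltac:(lia)), (HB 0%nat k ltac:(lia) Hk), (HB 1%nat k ltac:(lia) Hk),
      (HB 2%nat k ltac:(lia) Hk); reflexivity.
Qed.

Definition to_s (t : list Z) : (mat * dvec)%type :=
  (fun i j => nth (3*i+j) t 0, fun i => nth (9+i) t 0).

Definition LL : list (list Z) := [[0; -2; 1; 2; 0; -1; -1; 1; 0; -1; -1; -2]; [0; -2; 1; 2; 0; -1; -1; 1; 0; 1; 1; 2]; [0; -1; -1; 1; 0; -1; 1; 1; 0; -1; 1; -1]; [0; -1; -1; 1; 0; -1; 1; 1; 0; 1; -1; 1]; [0; -1; -1; 1; 0; 1; 1; -1; 0; -1; -1; 1]; [0; -1; -1; 1; 0; 1; 1; -1; 0; 1; 1; -1]; [0; -1; 1; 1; 0; -2; -1; 2; 0; -2; -1; -1]; [0; -1; 1; 1; 0; -2; -1; 2; 0; 2; 1; 1]; [0; -1; 1; 1; 0; 1; -1; -1; 0; -1; 1; 1]; [0; -1; 1; 1; 0; 1; -1; -1; 0; 1; -1; -1]; [0; -1; 2; 1; 0; -1; -2; 1; 0; -1; -2; -1]; [0; -1; 2; 1; 0; -1; -2; 1; 0; 1; 2; 1]; [0; 1; -2; -1; 0; 1; 2; -1; 0; -1; -2; -1]; [0; 1; -2; -1; 0; 1; 2; -1; 0; 1; 2; 1]; [0; 1; -1; -1; 0; -1; 1; 1; 0; -1; 1;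 1]; [0; 1; -1; -1; 0; -1; 1; 1; 0; 1; -1; -1]; [0; 1; -1; -1; 0; 2; 1; -2; 0; -2; -1; -1]; [0; 1; -1; -1; 0; 2; 1; -2; 0; 2; 1; 1]; [0; 1; 1; -1; 0; -1; -1; 1; 0; -1; -1; 1]; [0; 1; 1; -1; 0; -1; -1; 1; 0; 1; 1; -1]; [0; 1; 1; -1; 0; 1; -1; -1; 0; -1; 1; -1]; [0; 1; 1; -1; 0; 1; -1; -1; 0; 1; -1; 1]; [0; 2; -1; -2; 0; 1; 1; -1; 0; -1; -1; -2]; [0; 2; -1; -2; 0; 1; 1; -1; 0; 1; 1; 2]].

Definition idx := [0%nat; 1%nat; 2%nat].

Definition agreeb (s1 s2 : (mat * dvec)%type) : bool :=
  forallb (fun i => forallb (fun j => Z.eqb (fst s1 i j) (fst s2 i j)) idx) idx &&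
  forallb (fun i => Z.eqb (snd s1 i) (snd s2 i)) idx.

Lemma in_idx i : (i < 3)%nat -> In i idx.
Proof. intros H; unfold idx; simpl; lia. Qed.

Lemma agreeb_ok s1 s2 : agreeb s1 s2 = true -> agree s1 s2.
Proof.
  unfold agreeb; intros H; apply andb_prop in H as [H1 H2].
  rewrite forallb_forall in H1, H2; split.
  - intros i j Hi Hj. specialize (H1 i (in_idx i Hi)).
    rewrite forallb_forall in H1. apply Z.eqb_eq, H1, in_idx, Hj.
  - intros i Hi; apply Z.eqb_eq, H2, in_idx, Hi.
Qed.

Lemma closure_check :
  forallb (fun t => forallb (fun k =>
     existsb (fun t' => agreeb (mut_seed (to_s t) k) (to_s t')) LL) idx) LL = true.
Proof. vm_compute. reflexivity. Qed.

Lemma deg_check :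
  forallb (fun t => forallb (fun i => let d := snd (to_s t) i in
     orb (orb (Z.eqb d 1) (Z.eqb d (-1))) (orb (Z.eqb d 2) (Z.eqb d (-2)))) idx) LL = true.
Proof. vm_compute. reflexivity. Qed.

Definition Inv s := exists t, In t LL /\ agree s (to_s t).

Lemma agree_trans a b c : agree a b -> agree b c -> agree a c.
Proof.
  intros [H1 H2] [H3 H4]; split; intros; [rewrite H1, H3 | rewrite H2, H4]; auto.
Qed.

Lemma Inv_mut s k : Inv s -> (k < 3)%nat -> Inv (mut_seed s k).
Proof.
  intros [t [Ht Ha]] Hk.
  pose proof closure_check as C. rewrite forallb_forall in C.
  specialize (C t Ht). rewrite forallb_forall in C.
  specialize (C k (in_idx k Hk)). apply existsb_exists in C as [t' [Ht' Hb]].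
  exists t'; split; auto.
  eapply agree_trans; [apply agree_mut; eauto | apply agreeb_ok; exact Hb].
Qed.

Lemma Inv_seq ks : forall s, Forall (fun i => (i < 3)%nat) ks -> Inv s -> Inv (mut_seq s ks).
Proof.
  induction ks as [|k ks IH]; intros s HF Hs; simpl; auto.
  inversion HF; subst. apply IH; auto. apply Inv_mut; auto.
Qed.

Theorem mainTheorem4 :
  forall d : Z, cluster_degree d <-> (d = 1 \/ d = -1 \/ d = 2 \/ d = -2).
Proof.
  intros d; split.
  - intros [ks [k [HF [Hk Hd]]]].
    assert (H0 : Inv (B0, g0)).
    { exists [0; 2; -1; -2; 0; 1; 1; -1; 0; 1; 1; 2]; split.
      - vm_compute; tauto.
      - apply agreeb_ok; vm_compute; reflexivity. }
    destruct (Inv_seq ks _ HF H0) as [t [Ht [_ Hg]]].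
    rewrite (Hg k Hk) in Hd. subst d.
    pose proof deg_check as C. rewrite forallb_forall in C.
    specialize (C t Ht). rewrite forallb_forall in C.
    specialize (C k (in_idx k Hk)). simpl in C.
    repeat rewrite Bool.orb_true_iff in C. rewrite !Z.eqb_eq in C. tauto.
  - intros [H|[H|[H|H]]]; subst d.
    + exists [], 0%nat; repeat split; auto.
    + exists [2%nat], 2%nat; repeat split; auto.
    + exists [], 2%nat; repeat split; auto.
    + exists [2%nat; 0%nat; 1%nat], 1%nat; repeat split; repeat constructor; vm_compute; reflexivity.
Qed.
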